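(* Let $d,n,p\ge1$, $a_1,\dots,a_n\in\mathbb{R}^d$, $\lambda_1,\dots,\lambda_n\ge0$, $\tau=r/s$ with $r\ge s\ge1$ integers, $\gcd(r,s)=1$, and let $\mathbf{K}=\{x\in\mathbb{R}^d:g_1(x)\ge0,\dots,g_m(x)\ge0\}$ be a compact basic closed semialgebraic set satisfying the Archimedean property. For each $i$ let $UB_i\ge \max\{\|x-a_i\|_\tau: x\in\mathbf{K}\}$. Then: (i) If $(x_1,\dots,x_p)\in\mathbf{K}^p$ is feasible for (LOCOMF), there exist $(z,u,v,\zeta,w,t,\theta)$ such that $(x,z,u,v,\zeta,w,t,\theta)$ is feasible for (MFOMP$_\lambda$) and $\sum_{\ell}\lambda_\ell\theta_\ell=\sum_i\lambda_i\tilde f_{(i)}(x)$. (ii) Conversely, if $(x,z,u,v,\zeta,w,t,\theta)$ is feasible for (MFOMP$_\lambda$), then $x=(x_1,\dots,x_p)$ is feasible for (LOCOMF). (iii) $\rho_\lambda=\hat\rho_\lambda$. (iv) If $\mathbf{K}$ satisfies Slater's condition (it has a point where all $g_k$ are strictly positive), then the continuous relaxation of (MFOMP$_\lambda$), obtained by replacing $w_{i\ell}\in\{0,1\}$, $z_{ij}\in\{0,1\}$ with $w_{i\ell},z_{ij}\in[0,1]$, has a feasible point at which all inequality constraints hold strictly (Slater's condition).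
   Context: $\|z\|_\tau=(\sum_{k=1}^d|z_k|^\tau)^{1/\tau}$. For $x=(x_1,\dots,x_p)\in(\mathbb{R}^d)^p$ let $\tilde f_i(x)=\min_{j=1,\dots,p}\|x_j-a_i\|_\tau$, and let $\tilde f_{(1)}(x)\ge\dots\ge\tilde f_{(n)}(x)$ be the nonincreasing rearrangement of $(\tilde f_1(x),\dots,\tilde f_n(x))$. Problem (LOCOMF): $\rho_\lambda=\min\{\sum_{i=1}^n\lambda_i\tilde f_{(i)}(x): x_j\in\mathbf{K},\ j=1,\dots,p\}$. Problem (MFOMP$_\lambda$): $\hat\rho_\lambda=\min\sum_{\ell=1}^n\lambda_\ell\theta_\ell$ over $x_j\in\mathbf{K}$ ($x_j=(x_{j1},\dots,x_{jd})$), nonnegative reals $\theta_\ell,t_i,v_{ijk},\zeta_{ijk},u_{ij}$ and binaries $w_{i\ell},z_{ij}\in\{0,1\}$ ($i,\ell=1,\dots,n$; $j=1,\dots,p$; $k=1,\dots,d$), subject to: $t_i\le\theta_\ell+UB_i(1-w_{i\ell})$ for all $i,\ell$; $\theta_\ell\ge\theta_{\ell+1}$ for $\ell=1,\dots,n-1$; $u_{ij}\le t_i+UB_i(1-z_{ij})$ for all $i,j$; $v_{ijk}-x_{jk}+a_{ik}\ge0$ and $v_{ijk}+x_{jk}-a_{ik}\ge0$ for all $i,j,k$; $v_{ijk}^r\le\zeta_{ijk}^su_{ij}^{r-s}$ for all $i,j,k$; $\sum_{k=1}^d\zeta_{ijk}\le u_{ij}$ for all $i,j$; $\sum_{j=1}^pz_{ij}=1$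 for all $i$; $\sum_{i=1}^nw_{i\ell}=1$ for all $\ell$; $\sum_{\ell=1}^nw_{i\ell}=1$ for all $i$. Convention $0^0=1$ when $r=s$. A set $\mathbf{K}=\{g_k\ge0\}$ satisfies the Archimedean property if for some $M>0$, $M-\sum_i x_i^2=\sigma_0+\sum_k\sigma_kg_k$ with $\sigma_0,\sigma_k$ sums of squares of polynomials. *)

(* Defs.v *)
From Stdlib Require Import Reals List Arith.
Import ListNotations.
Open Scope R_scope.

Fixpoint sumR (n : nat) (f : nat -> R) : R :=
  match n with O => 0 | S m => sumR m f + f m end.

(* minR m f = min (f 0, ..., f m) *)
Fixpoint minR (m : nat) (f : nat -> R) : R :=
  match m with O => f O | S m' => Rmin (minR m' f) (f (S m')) end.

(* (Stdlib's Rpower 0 y = 1, so we fix the value at nonpositive bases.) *)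
Definition rpow (x y : R) : R := if Rle_dec x 0 then 0 else Rpower x y.

(* ---------- the tau-norm, tau = r/s, on R^d (vectors are nat -> R,
   coordinates 0..d-1) ---------- *)
Definition tau (r s : nat) : R := INR r / INR s.

Definition tau_norm (d r s : nat) (z : nat -> R) : R :=
  rpow (sumR d (fun k => rpow (Rabs (z k)) (tau r s))) (/ tau r s).

Definition ftilde (d p r s : nat) (a : nat -> nat -> R)
  (x : nat -> nat -> R) (i : nat) : R :=
  minR (p - 1) (fun j => tau_norm d r s (fun k => x j k - a i k)).

Fixpoint insert_desc (y : R) (l : list R) : list R :=
  match l with
  | [] => [y]
  | h :: t => if Rle_dec y h then h :: insert_desc y t else y :: l
  end.

Definition sort_desc (l : list R) : list R := fold_right insert_desc [] l.

Definition loc_obj (d n p r s : nat) (a : nat -> nat -> R) (lam : nat -> R)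
  (x : nat -> nat -> R) : R :=
  let sorted := sort_desc (map (ftilde d p r s a x) (seq 0 n)) in
  sumR n (fun i => lam i * nth i sorted 0).

Inductive mpoly : Type :=
| PVar : nat -> mpoly
| PConst : R -> mpoly
| PAdd : mpoly -> mpoly -> mpoly
| PMul : mpoly -> mpoly -> mpoly.

Fixpoint peval (q : mpoly) (x : nat -> R) : R :=
  match q with
  | PVar k => x k
  | PConst c => c
  | PAdd q1 q2 => peval q1 x + peval q2 x
  | PMul q1 q2 => peval q1 x * peval q2 x
  end.

Fixpoint poly_in (d : nat) (q : mpoly) : Prop :=
  match q with
  | PVar k => (k < d)%nat
  | PConst _ => True
  | PAdd q1 q2 => poly_in d q1 /\ poly_in d q2
  | PMul q1 q2 => poly_in d q1 /\ poly_in d q2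
  end.

(* a sum of squares of polynomials, given by the list of the squared ones *)
Definition sos_eval (l : list mpoly) (x : nat -> R) : R :=
  fold_right (fun q acc => peval q x ^ 2 + acc) 0 l.

Definition inK (m : nat) (g : nat -> mpoly) (x : nat -> R) : Prop :=
  forall k, (k < m)%nat -> 0 <= peval (g k) x.

(* Archimedean property: M - sum x_i^2 = sigma_0 + sum_k sigma_k g_k
   with sigma's SOS (identity of polynomials in d variables; since R is
   infinite this is the identity of the polynomial functions on R^d). *)
Definition archimedean (d m : nat) (g : nat -> mpoly) : Prop :=
  exists (M : R) (sig0 : list mpoly) (sig : nat -> list mpoly),
    0 < M /\
    Forall (poly_in d) sig0 /\
    (forall k, (k < m)%nat -> Forall (poly_in d) (sig k)) /\
    forall x : nat -> R,
      M - sumR d (fun i => x i ^ 2)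
      = sos_eval sig0 x + sumR m (fun k => sos_eval (sig k) x * peval (g k) x).

Definition slater_K (m : nat) (g : nat -> mpoly) : Prop :=
  exists x : nat -> R, forall k, (k < m)%nat -> 0 < peval (g k) x.

Definition loc_feasible (p m : nat) (g : nat -> mpoly) (x : nat -> nat -> R) : Prop :=
  forall j, (j < p)%nat -> inK m g (x j).

(* ---------- (MFOMP_lambda) ----------
   x j k = x_{jk}, theta l, t i, v i j k, zeta i j k, u i j, w i l, z i j;
   indices 0-based: i,l < n, j < p, k < d.
   [bin = true]: w, z binary;  [bin = false]: continuous relaxation w, z in [0,1]. *)
Definition mf_feasible (d n p r s m : nat) (g : nat -> mpoly)
  (a : nat -> nat -> R) (UB : nat -> R) (bin : bool)
  (x : nat -> nat -> R) (z u : nat -> nat -> R) (v zeta : nat -> nat -> nat -> R)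
  (w : nat -> nat -> R) (t theta : nat -> R) : Prop :=
  let dom := fun y : R => if bin then (y = 0 \/ y = 1) else (0 <= y <= 1) in
  (forall j, (j < p)%nat -> inK m g (x j)) /\
  (forall l, (l < n)%nat -> 0 <= theta l) /\
  (forall i, (i < n)%nat -> 0 <= t i) /\
  (forall i j k, (i < n)%nat -> (j < p)%nat -> (k < d)%nat ->
       0 <= v i j k /\ 0 <= zeta i j k) /\
  (forall i j, (i < n)%nat -> (j < p)%nat -> 0 <= u i j) /\
  (forall i l, (i < n)%nat -> (l < n)%nat -> dom (w i l)) /\
  (forall i j, (i < n)%nat -> (j < p)%nat -> dom (z i j)) /\
  (forall i l, (i < n)%nat -> (l < n)%nat ->
       t i <= theta l + UB i * (1 - w i l)) /\
  (forall l, (l + 1 < n)%nat -> theta l >= theta (l + 1)%nat) /\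
  (forall i j, (i < n)%nat -> (j < p)%nat -> u i j <= t i + UB i * (1 - z i j)) /\
  (forall i j k, (i < n)%nat -> (j < p)%nat -> (k < d)%nat ->
       v i j k - x j k + a i k >= 0 /\ v i j k + x j k - a i k >= 0) /\
  (forall i j k, (i < n)%nat -> (j < p)%nat -> (k < d)%nat ->
       v i j k ^ r <= zeta i j k ^ s * u i j ^ (r - s)) /\
  (forall i j, (i < n)%nat -> (j < p)%nat -> sumR d (fun k => zeta i j k) <= u i j) /\
  (forall i, (i < n)%nat -> sumR p (fun j => z i j) = 1) /\
  (forall l, (l < n)%nat -> sumR n (fun i => w i l) = 1) /\
  (forall i, (i < n)%nat -> sumR n (fun l => w i l) = 1).

(* Strict feasibility (Slater point) for the continuous relaxation: every
   inequality constraint of the relaxed problem holds strictly (including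
   g_k(x_j) > 0, positivity of the nonnegative variables and w, z > 0);
   only the upper bounds w, z <= 1 are kept non-strict, since they cannot be
   strict together with the equality constraints when p = 1 or n = 1. *)
Definition mf_relaxed_strict (d n p r s m : nat) (g : nat -> mpoly)
  (a : nat -> nat -> R) (UB : nat -> R)
  (x : nat -> nat -> R) (z u : nat -> nat -> R) (v zeta : nat -> nat -> nat -> R)
  (w : nat -> nat -> R) (t theta : nat -> R) : Prop :=
  (forall j k, (j < p)%nat -> (k < m)%nat -> 0 < peval (g k) (x j)) /\
  (forall l, (l < n)%nat -> 0 < theta l) /\
  (forall i, (i < n)%nat -> 0 < t i) /\
  (forall i j k, (i < n)%nat -> (j < p)%nat -> (k < d)%nat ->
       0 < v i j k /\ 0 < zeta i j k) /\
  (forall i j, (i < n)%nat -> (j < p)%nat -> 0 < u i j) /\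
  (forall i l, (i < n)%nat -> (l < n)%nat -> 0 < w i l <= 1) /\
  (forall i j, (i < n)%nat -> (j < p)%nat -> 0 < z i j <= 1) /\
  (forall i l, (i < n)%nat -> (l < n)%nat ->
       t i < theta l + UB i * (1 - w i l)) /\
  (forall l, (l + 1 < n)%nat -> theta l > theta (l + 1)%nat) /\
  (forall i j, (i < n)%nat -> (j < p)%nat -> u i j < t i + UB i * (1 - z i j)) /\
  (forall i j k, (i < n)%nat -> (j < p)%nat -> (k < d)%nat ->
       v i j k - x j k + a i k > 0 /\ v i j k + x j k - a i k > 0) /\
  (forall i j k, (i < n)%nat -> (j < p)%nat -> (k < d)%nat ->
       v i j k ^ r < zeta i j k ^ s * u i j ^ (r - s)) /\
  (forall i j, (i < n)%nat -> (j < p)%nat -> sumR d (fun k => zeta i j k) < u i j) /\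
  (forall i, (i < n)%nat -> sumR p (fun j => z i j) = 1) /\
  (forall l, (l < n)%nat -> sumR n (fun i => w i l) = 1) /\
  (forall i, (i < n)%nat -> sumR n (fun l => w i l) = 1).

Definition mf_obj (n : nat) (lam theta : nat -> R) : R :=
  sumR n (fun l => lam l * theta l).

(* Main.v *)
Require Import Defs.
From Stdlib Require Import Reals List Arith Lra Lia Permutation FinFun ClassicalEpsilon.
Import ListNotations.
Open Scope R_scope.

Lemma sumR_ext n f g : (forall i, (i < n)%nat -> f i = g i) -> sumR n f = sumR n g.
Proof. induction n; simpl; intros H; auto. rewrite IHn by (intros; apply H; lia). rewrite H by lia. auto. Qed.

Lemma sumR_le n f g : (forall i, (i < n)%nat -> f i <= g i) -> sumR n f <= sumR n g.
Proof. induction n; simpl; intros H; [lra|]. assert (f n <= g n) by (apply H; lia).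
  assert (sumR n f <= sumR n g) by (apply IHn; intros; apply H; lia). lra. Qed.

Lemma sumR_lt n f g : (0 < n)%nat -> (forall i, (i < n)%nat -> f i < g i) -> sumR n f < sumR n g.
Proof. destruct n; [lia|]. intros _ H; simpl. assert (f n < g n) by (apply H; lia).
  assert (sumR n f <= sumR n g) by (apply sumR_le; intros; left; apply H; lia). lra. Qed.

Lemma sumR_nonneg n f : (forall i, (i < n)%nat -> 0 <= f i) -> 0 <= sumR n f.
Proof. intros H. replace 0 with (sumR n (fun _ => 0)). apply sumR_le; auto.
  induction n; simpl; auto. rewrite IHn; [lra|]. intros; apply H; lia. Qed.

Lemma sumR_term_le n f i : (forall i, (i < n)%nat -> 0 <= f i) -> (i < n)%nat -> f i <= sumR n f.
Proof. induction n; intros H Hi; [lia|]. simpl.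
  assert (0 <= sumR n f) by (apply sumR_nonneg; intros; apply H; lia).
  destruct (Nat.eq_dec i n). subst; lra.
  assert (f i <= sumR n f) by (apply IHn; [intros; apply H; lia| lia]).
  assert (0 <= f n) by (apply H; lia). lra. Qed.

Lemma sumR_const n c : sumR n (fun _ => c) = INR n * c.
Proof. induction n; simpl sumR; [simpl; lra|]. rewrite IHn, S_INR. lra. Qed.

Lemma sumR_scal n c f : sumR n (fun i => c * f i) = c * sumR n f.
Proof. induction n; simpl; [lra|]. rewrite IHn. lra. Qed.

Lemma sumR_plus n f g : sumR n (fun i => f i + g i) = sumR n f + sumR n g.
Proof. induction n; simpl; [lra|]. rewrite IHn. lra. Qed.

Lemma sumR_single n f i0 : (i0 < n)%nat -> (forall i, (i < n)%nat -> i <> i0 -> f i = 0) ->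
  sumR n f = f i0.
Proof. induction n; intros Hi H; [lia|]. simpl. destruct (Nat.eq_dec i0 n).
  - subst. replace (sumR n f) with (sumR n (fun _ => 0)). rewrite sumR_const; lra.
    apply sumR_ext; intros; symmetry; apply H; lia.
  - rewrite IHn; [| lia | intros; apply H; lia]. rewrite (H n); [lra|lia|lia]. Qed.

Lemma sumR_zero_each n f : (forall i, (i < n)%nat -> 0 <= f i) -> sumR n f <= 0 ->
  forall i, (i < n)%nat -> f i = 0.
Proof. intros H Hs i Hi. pose proof (sumR_term_le n f i H Hi). pose proof (H i Hi). lra. Qed.

Lemma sumR_cv n (F : nat -> nat -> R) (L : nat -> R) :
  (forall i, (i < n)%nat -> Un_cv (fun k => F k i) (L i)) ->
  Un_cv (fun k => sumR n (F k)) (sumR n L).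
Proof. induction n; intros H; simpl.
  - intros e He; exists 0%nat; intros; unfold Rdist; rewrite Rminus_diag, Rabs_R0; lra.
  - apply CV_plus. apply IHn; intros; apply H; lia. apply H; lia. Qed.

Lemma minR_le m f j : (j <= m)%nat -> minR m f <= f j.
Proof. induction m; intros Hj; simpl.
  - replace j with 0%nat by lia; lra.
  - destruct (Nat.eq_dec j (S m)). subst; apply Rmin_r.
    eapply Rle_trans; [apply Rmin_l| apply IHm; lia]. Qed.

Lemma minR_attained m f : exists j, (j <= m)%nat /\ minR m f = f j.
Proof. induction m; simpl. exists 0%nat; split; auto.
  destruct IHm as [j [Hj E]]. unfold Rmin. destruct (Rle_dec (minR m f) (f (S m))).
  exists j; split; auto. exists (S m); split; auto. Qed.

Lemma minR_ge m f c : (forall j, (j <= m)%nat -> c <= f j) -> c <= minR m f.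
Proof. intros H. destruct (minR_attained m f) as [j [Hj ->]]. auto. Qed.

Lemma absle x e : Rabs x <= e -> - e <= x <= e.
Proof. unfold Rabs; destruct (Rcase_abs x); lra. Qed.
Lemma abslt x e : Rabs x < e -> - e < x < e.
Proof. unfold Rabs; destruct (Rcase_abs x); lra. Qed.

Lemma Rmin_lip a b a' b' e : Rabs (a - a') <= e -> Rabs (b - b') <= e -> Rabs (Rmin a b - Rmin a' b') <= e.
Proof. intros H1 H2. apply absle in H1; apply absle in H2.
  apply Rabs_le. unfold Rmin. destruct (Rle_dec a b), (Rle_dec a' b'); lra. Qed.

Lemma minR_cv m (F : nat -> nat -> R) (L : nat -> R) :
  (forall j, (j <= m)%nat -> Un_cv (fun k => F k j) (L j)) ->
  Un_cv (fun k => minR m (F k)) (minR m L).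
Proof. induction m; intros H; simpl. apply H; lia.
  intros e He. destruct (IHm (fun j Hj => H j ltac:(lia)) e He) as [N1 H1].
  destruct (H (S m) (le_n _) e He) as [N2 H2]. exists (max N1 N2). intros k Hk.
  unfold Rdist in *. specialize (H1 k ltac:(lia)). specialize (H2 k ltac:(lia)).
  apply Rle_lt_trans with (Rmax (Rabs (minR m (F k) - minR m L)) (Rabs (F k (S m) - L (S m)))).
  apply Rmin_lip; [apply Rmax_l | apply Rmax_r]. unfold Rmax; destruct Rle_dec; lra. Qed.
Fixpoint sortedd (l : list R) : Prop :=
  match l with [] => True | h :: t => (forall y, In y t -> y <= h) /\ sortedd t end.

Lemma ins_perm y l : Permutation (insert_desc y l) (y :: l).
Proof. induction l; simpl; auto. destruct Rle_dec; auto.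
  eapply perm_trans. apply perm_skip, IHl. apply perm_swap. Qed.

Lemma sort_perm l : Permutation (sort_desc l) l.
Proof. induction l; simpl; auto. eapply perm_trans. apply ins_perm. apply perm_skip, IHl. Qed.

Lemma ins_sorted y l : sortedd l -> sortedd (insert_desc y l).
Proof. induction l as [|h t IH]; simpl; intros H.
  - split; auto. intros ? [].
  - destruct H as [H1 H2]. destruct Rle_dec as [Hle|Hn].
    + simpl; split; auto. intros z Hz. apply (Permutation_in _ (ins_perm y t)) in Hz.
      destruct Hz as [<-|Hz]; auto.
    + simpl; split; [|split; auto]. intros z [<-|Hz]; [lra|]. specialize (H1 z Hz); lra. Qed.

Lemma sort_sorted l : sortedd (sort_desc l).
Proof. induction l; simpl; auto. apply ins_sorted; auto. Qed.

Lemma sorted_perm_eq l1 l2 : sortedd l1 -> sortedd l2 -> Permutation l1 l2 -> l1 = l2.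
Proof. revert l2; induction l1 as [|h1 t1 IH]; intros l2 S1 S2 P.
  - symmetry; apply Permutation_nil; auto.
  - destruct l2 as [|h2 t2]. apply Permutation_sym, Permutation_nil in P; discriminate.
    simpl in S1, S2. destruct S1 as [A1 B1], S2 as [A2 B2].
    assert (h2 <= h1). { assert (In h2 (h1 :: t1)) by (apply (Permutation_in _ (Permutation_sym P)); left; auto).
      destruct H as [->|H]; [lra| apply A1; auto]. }
    assert (h1 <= h2). { assert (In h1 (h2 :: t2)) by (apply (Permutation_in _ P); left; auto).
      destruct H0 as [->|H0]; [lra| apply A2; auto]. }
    assert (h1 = h2) by lra. subst. f_equal. apply IH; auto. eapply Permutation_cons_inv; eauto. Qed.

Lemma sort_perm_inv l l' : Permutation l l' -> sort_desc l = sort_desc l'.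
Proof. intros P. apply sorted_perm_eq; try apply sort_sorted.
  eapply perm_trans. apply sort_perm. eapply perm_trans. apply P. apply Permutation_sym, sort_perm. Qed.

Lemma sort_id l : sortedd l -> sort_desc l = l.
Proof. intros H. apply sorted_perm_eq; auto. apply sort_sorted. apply sort_perm. Qed.

Lemma ins_head h t : sortedd (h :: t) -> insert_desc h t = h :: t.
Proof. revert h; induction t as [|h' t IH]; intros h H; simpl; auto.
  simpl in H. destruct H as [A [B C]]. assert (h' <= h) by (apply A; left; auto).
  destruct Rle_dec; auto. assert (h = h') by lra. subst h'. rewrite IH; auto. simpl; split; auto. Qed.

Lemma ins_mono S1 S2 : Forall2 Rle S1 S2 -> sortedd S1 -> sortedd S2 ->
  forall x y, x <= y -> Forall2 Rle (insert_desc x S1) (insert_desc y S2).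
Proof. induction 1 as [|h1 h2 t1 t2 Hh Ht IH]; intros Q1 Q2 x y Hxy; simpl.
  - constructor; [exact Hxy| constructor].
  - pose proof Q1 as Q1'; pose proof Q2 as Q2'. simpl in Q1', Q2'.
    destruct Q1' as [A1 B1], Q2' as [A2 B2].
    destruct (Rle_dec x h1), (Rle_dec y h2).
    + constructor; auto.
    + constructor; [lra|]. rewrite <- (ins_head h2 t2); auto. apply IH; auto. lra.
    + constructor; [lra|]. rewrite <- (ins_head h1 t1); auto. apply IH; auto. lra.
    + constructor; auto.
Qed.

Lemma sort_mono l1 l2 : Forall2 Rle l1 l2 -> Forall2 Rle (sort_desc l1) (sort_desc l2).
Proof. induction 1; simpl; auto. apply ins_mono; auto; apply sort_sorted. Qed.

Lemma ins_shift e y S : insert_desc (y + e) (map (fun z => z + e) S) = map (fun z => z + e) (insert_desc y S).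
Proof. induction S; simpl; auto. destruct (Rle_dec (y + e) (a + e)), (Rle_dec y a); try lra; simpl; auto.
  rewrite IHS; auto. Qed.

Lemma sort_shift e l : sort_desc (map (fun z => z + e) l) = map (fun z => z + e) (sort_desc l).
Proof. induction l; simpl; auto. rewrite IHl. apply ins_shift. Qed.

Lemma Forall2_nth_le l1 l2 : Forall2 Rle l1 l2 -> forall k, nth k l1 0 <= nth k l2 0.
Proof. induction 1; intros k; destruct k; simpl; auto; lra. Qed.

Lemma Forall2_seq (f g : nat -> R) n st : (forall i, (st <= i < st + n)%nat -> f i <= g i) ->
  Forall2 Rle (map f (seq st n)) (map g (seq st n)).
Proof. revert st; induction n; intros st H; simpl; constructor. apply H; lia. apply IHn; intros; apply H; lia. Qed.

Lemma length_sort l : length (sort_desc l) = length l.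
Proof. apply Permutation_length, sort_perm. Qed.

Lemma nth_map_shift e l k : (k < length l)%nat -> nth k (map (fun z => z + e) l) 0 = nth k l 0 + e.
Proof. revert k; induction l; intros k Hk; simpl in *; [lia|]. destruct k; auto. apply IHl; lia. Qed.

Definition srt (n : nat) (f : nat -> R) (k : nat) : R := nth k (sort_desc (map f (seq 0 n))) 0.

Lemma srt_mono n f g e : (forall i, (i < n)%nat -> f i <= g i + e) ->
  forall k, (k < n)%nat -> srt n f k <= srt n g k + e.
Proof. intros H k Hk. unfold srt.
  assert (F : Forall2 Rle (map f (seq 0 n)) (map (fun i => g i + e) (seq 0 n))).
  { apply Forall2_seq; intros; apply H; lia. }
  apply sort_mono in F. apply Forall2_nth_le with (k := k) in F.
  replace (map (fun i => g i + e) (seq 0 n)) with (map (fun z => z + e) (map g (seq 0 n))) in F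
    by (rewrite map_map; auto).
  rewrite sort_shift, nth_map_shift in F; auto. rewrite length_sort, length_map, length_seq; auto. Qed.

Lemma srt_cv n (F : nat -> nat -> R) L :
  (forall i, (i < n)%nat -> Un_cv (fun k => F k i) (L i)) ->
  forall k, (k < n)%nat -> Un_cv (fun t => srt n (F t) k) (srt n L k).
Proof. intros H k Hk e He.
  assert (He2 : 0 < e / 2) by lra.
  assert (Hall : forall m, (m <= n)%nat -> exists N, forall t, (t >= N)%nat -> forall i, (i < m)%nat -> Rabs (F t i - L i) < e / 2).
  { induction m; intros Hm. exists 0%nat; intros; lia.
    destruct (IHm ltac:(lia)) as [N1 H1]. destruct (H m ltac:(lia) _ He2) as [N2 H2].
    exists (max N1 N2); intros t Ht i Hi. destruct (Nat.eq_dec i m). subst; apply H2; lia. apply H1; lia. }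
  destruct (Hall n (le_n _)) as [N HN]. exists N; intros t Ht. unfold Rdist.
  assert (A := srt_mono n (F t) L (e/2) ltac:(intros i Hi; specialize (HN t Ht i Hi); apply abslt in HN; lra) k Hk).
  assert (B := srt_mono n L (F t) (e/2) ltac:(intros i Hi; specialize (HN t Ht i Hi); apply abslt in HN; lra) k Hk).
  unfold Rabs; destruct Rcase_abs; lra. Qed.
Lemma Rpower_pos x y : 0 < Rpower x y.
Proof. unfold Rpower; apply exp_pos. Qed.

Lemma rpow_nonneg x y : 0 <= rpow x y.
Proof. unfold rpow; destruct Rle_dec; [lra| left; apply Rpower_pos]. Qed.

Lemma rpow_pos x y : 0 < x -> rpow x y = Rpower x y.
Proof. intros H; unfold rpow; destruct Rle_dec; [lra|auto]. Qed.

Lemma rpow_zero x y : x <= 0 -> rpow x y = 0.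
Proof. intros H; unfold rpow; destruct Rle_dec; [auto|lra]. Qed.

Lemma rpow_eq0 x y : 0 <= x -> rpow x y = 0 -> x = 0.
Proof. intros H E. destruct (Rle_dec x 0). lra. rewrite rpow_pos in E by lra.
  pose proof (Rpower_pos x y); lra. Qed.

Lemma Rpower_mono_base a b y : 0 < y -> 0 < a <= b -> Rpower a y <= Rpower b y.
Proof. intros; apply Rle_Rpower_l; lra. Qed.

Lemma rpow_mono a b y : 0 < y -> a <= b -> rpow a y <= rpow b y.
Proof. intros Hy H. destruct (Rle_dec a 0). rewrite rpow_zero by auto. apply rpow_nonneg.
  rewrite !rpow_pos by lra. apply Rpower_mono_base; lra. Qed.

Lemma pow_lt_nn a b k : 0 <= a < b -> (1 <= k)%nat -> a ^ k < b ^ k.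
Proof. intros H Hk. induction k; [lia|]. destruct k. simpl; lra.
  change (a * a ^ S k < b * b ^ S k). assert (a ^ S k < b ^ S k) by (apply IHk; lia).
  assert (0 <= a ^ S k) by (apply pow_le; lra). nra. Qed.

Lemma Rpower_powk x y k : 0 < x -> Rpower x y ^ k = Rpower x (y * INR k).
Proof. intros H. rewrite <- Rpower_pow by apply Rpower_pos. apply Rpower_mult. Qed.

Section Tau.
Variables r s : nat.
Hypothesis hrs : (1 <= s <= r)%nat.

Lemma INRs_pos : 0 < INR s.
Proof. apply lt_0_INR; lia. Qed.
Lemma tau_ge1 : 1 <= tau r s.
Proof. unfold tau. pose proof INRs_pos. assert (INR s <= INR r) by (apply le_INR; lia).
  apply Rmult_le_reg_r with (INR s); auto. field_simplify; lra. Qed.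
Lemma tau_pos : 0 < tau r s.
Proof. pose proof tau_ge1; lra. Qed.
Lemma tau_s : tau r s * INR s = INR r.
Proof. unfold tau. pose proof INRs_pos. field. lra. Qed.
Lemma taum1_s : (tau r s - 1) * INR s = INR (r - s).
Proof. rewrite minus_INR by lia. rewrite Rmult_minus_distr_r, tau_s. lra. Qed.

Lemma rpow_tau_pow v : 0 <= v -> rpow v (tau r s) ^ s = v ^ r.
Proof. intros H. destruct (Rle_dec v 0).
  - assert (v = 0) by lra. subst. rewrite rpow_zero by lra. rewrite !pow_i by lia. auto.
  - rewrite rpow_pos by lra. rewrite Rpower_powk by lra. rewrite tau_s. apply Rpower_pow. lra. Qed.

Lemma holder d (c v zeta : nat -> R) (u : R) :
  0 <= u ->
  (forall k, (k < d)%nat -> Rabs (c k) <= v k /\ 0 <= zeta k) ->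
  (forall k, (k < d)%nat -> v k ^ r <= zeta k ^ s * u ^ (r - s)) ->
  sumR d zeta <= u ->
  tau_norm d r s c <= u.
Proof.
  intros Hu Hck Hp Hs. unfold tau_norm. pose proof tau_pos as Ht.
  destruct (Rle_dec u 0).
  - assert (u = 0) by lra. subst u.
    assert (Hz : forall k, (k < d)%nat -> zeta k = 0).
    { apply sumR_zero_each; auto. intros; apply Hck; auto. }
    assert (Hv : forall k, (k < d)%nat -> rpow (Rabs (c k)) (tau r s) = 0).
    { intros k Hk. destruct (Hck k Hk) as [A B]. specialize (Hp k Hk). rewrite Hz in Hp by auto.
      rewrite pow_i in Hp by lia. rewrite Rmult_0_l in Hp.
      assert (0 <= Rabs (c k)) by apply Rabs_pos.
      assert (v k = 0). { destruct (Rle_dec (v k) 0). lra.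
        assert (0 < v k ^ r) by (apply pow_lt; lra). lra. }
      apply rpow_zero. lra. }
    rewrite (sumR_ext _ _ (fun _ => 0)) by auto. rewrite sumR_const, Rmult_0_r.
    rewrite rpow_zero; lra.
  - assert (Hu' : 0 < u) by lra.
    set (U' := Rpower u (tau r s - 1)).
    assert (HU' : 0 < U') by apply Rpower_pos.
    assert (Hk : forall k, (k < d)%nat -> rpow (Rabs (c k)) (tau r s) <= zeta k * U').
    { intros k Hk. destruct (Hck k Hk) as [A B]. eapply Rle_trans. apply rpow_mono; eauto.
      destruct (Rle_dec (v k) 0). rewrite rpow_zero by auto. apply Rmult_le_pos; lra.
      rewrite rpow_pos by lra. destruct (Rle_dec (Rpower (v k) (tau r s)) (zeta k * U')); auto.
      exfalso. assert (C : (zeta k * U') ^ s < Rpower (v k) (tau r s) ^ s).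
      { apply pow_lt_nn; [split; [apply Rmult_le_pos; lra| lra] | lia]. }
      rewrite Rpow_mult_distr in C. unfold U' in C. rewrite !Rpower_powk in C by lra.
      rewrite tau_s, taum1_s in C. rewrite !Rpower_pow in C by lra. specialize (Hp k Hk). lra. }
    assert (HS : sumR d (fun k => rpow (Rabs (c k)) (tau r s)) <= Rpower u (tau r s)).
    { eapply Rle_trans. apply sumR_le. exact Hk.
      rewrite (sumR_ext _ _ (fun k => U' * zeta k)) by (intros; lra). rewrite sumR_scal.
      replace (Rpower u (tau r s)) with (U' * u). apply Rmult_le_compat_l; lra.
      unfold U'. rewrite <- (Rpower_1 u) at 2 by auto. rewrite <- Rpower_plus. f_equal; lra. }
    eapply Rle_trans. apply rpow_mono. apply Rinv_0_lt_compat; auto. exact HS.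
    rewrite rpow_pos by apply Rpower_pos. rewrite Rpower_mult. rewrite Rinv_r by lra.
    rewrite Rpower_1; lra.
Qed.

Definition zeta_of d (c : nat -> R) (k : nat) : R :=
  let U := tau_norm d r s c in
  if Rlt_dec 0 U then rpow (Rabs (c k)) (tau r s) / Rpower U (tau r s - 1) else 0.

Lemma tau_norm_nonneg d c : 0 <= tau_norm d r s c.
Proof. apply rpow_nonneg. Qed.

Lemma zeta_of_spec d c :
  (forall k, 0 <= zeta_of d c k) /\
  (forall k, (k < d)%nat -> Rabs (c k) ^ r <= zeta_of d c k ^ s * tau_norm d r s c ^ (r - s)) /\
  sumR d (zeta_of d c) <= tau_norm d r s c.
Proof.
  pose proof tau_pos as Ht. unfold zeta_of. set (U := tau_norm d r s c).
  set (S := sumR d (fun k => rpow (Rabs (c k)) (tau r s))).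
  assert (HUS : U = rpow S (/ tau r s)) by auto.
  destruct (Rlt_dec 0 U) as [HU|HU].
  - assert (HS : 0 < S). { destruct (Rle_dec S 0); [rewrite rpow_zero in HUS; lra | lra]. }
    rewrite rpow_pos in HUS by auto.
    assert (HSU : Rpower U (tau r s) = S). { rewrite HUS, Rpower_mult, Rinv_l by lra. apply Rpower_1; auto. }
    split; [|split].
    + intros k. unfold Rdiv. apply Rmult_le_pos. apply rpow_nonneg. left; apply Rinv_0_lt_compat, Rpower_pos.
    + intros k _. unfold Rdiv. rewrite Rpow_mult_distr, rpow_tau_pow by apply Rabs_pos.
      rewrite pow_inv. rewrite Rpower_powk, taum1_s, Rpower_pow by auto.
      rewrite Rmult_assoc, Rinv_l. lra. apply pow_nonzero; lra.
    + rewrite (sumR_ext _ _ (fun k => / Rpower U (tau r s - 1) * rpow (Rabs (c k)) (tau r s)))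
        by (intros; unfold Rdiv; lra).
      rewrite sumR_scal. fold S. rewrite <- HSU.
      replace (Rpower U (tau r s)) with (Rpower U (tau r s - 1) * Rpower U 1).
      rewrite Rpower_1 by auto. field_simplify. lra. pose proof (Rpower_pos U (tau r s - 1)); lra.
      rewrite <- Rpower_plus. f_equal; lra.
  - assert (U = 0) by (pose proof (tau_norm_nonneg d c); fold U in H; lra).
    split; [|split].
    + intros; lra.
    + intros k Hk. rewrite pow_i by lia. rewrite Rmult_0_l.
      destruct (Rle_dec S 0) as [HS|HS].
      2:{ rewrite rpow_pos in HUS by lra. pose proof (Rpower_pos S (/ tau r s)); lra. }
      assert (E := sumR_zero_each d _ (fun i _ => rpow_nonneg _ _) HS k Hk).
      apply rpow_eq0 in E; [|apply Rabs_pos]. rewrite E, pow_i by lia. lra.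
    + rewrite sumR_const; lra.
Qed.
End Tau.
Lemma fun_choice_nat (P : nat -> nat -> Prop) : (forall i, exists l, P i l) -> exists f, forall i, P i (f i).
Proof. intros H. exists (fun i => proj1_sig (constructive_indefinite_description _ (H i))).
  intros; apply proj2_sig. Qed.

Lemma binary_sum_one (z : nat -> R) p : (forall j, (j < p)%nat -> z j = 0 \/ z j = 1) ->
  sumR p z = 1 -> exists j, (j < p)%nat /\ z j = 1.
Proof. induction p; simpl; intros H E. lra.
  destruct (H p ltac:(lia)) as [E0|E1]. 
  - destruct IHp as [j [Hj Ej]]. intros; apply H; lia. lra. exists j; split; auto.
  - exists p; split; auto. Qed.

Lemma sumR_two n f i i' : (forall j, (j < n)%nat -> 0 <= f j) -> (i < i')%nat -> (i' < n)%nat ->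
  f i + f i' <= sumR n f.
Proof. induction n; intros H Hii Hi'; [lia|]. simpl. destruct (Nat.eq_dec i' n).
  - subst. assert (f i <= sumR n f) by (apply sumR_term_le; [intros; apply H; lia| lia]). lra.
  - assert (f i + f i' <= sumR n f) by (apply IHn; [intros; apply H; lia| lia| lia]).
    assert (0 <= f n) by (apply H; lia). lra. Qed.

Lemma nth_map_seq (h : nat -> R) n x : (x < n)%nat -> nth x (map h (seq 0 n)) 0 = h x.
Proof. intros Hx. rewrite nth_indep with (d' := h 0%nat) by (rewrite length_map, length_seq; auto).
  rewrite map_nth, seq_nth; auto. Qed.

Lemma sorted_nth L k : sortedd L -> (S k < length L)%nat -> nth (S k) L 0 <= nth k L 0.
Proof. revert k; induction L as [|h t IH]; intros k HS Hk; simpl in *; [lia|].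
  destruct HS as [A B]. destruct k.
  - destruct t; simpl in *; [lia|]. apply A; left; auto.
  - apply IH; auto; lia. Qed.

Lemma noninc_chain (th : nat -> R) n : (forall l, (l + 1 < n)%nat -> th l >= th (l + 1)%nat) ->
  forall a b, (a <= b)%nat -> (b < n)%nat -> th b <= th a.
Proof. intros H a b Hab Hb. induction b. replace a with 0%nat by lia; lra.
  destruct (Nat.eq_dec a (S b)). subst; lra.
  assert (th b <= th a) by (apply IHb; lia). specialize (H b ltac:(lia)). rewrite Nat.add_1_r in H. lra. Qed.

Lemma sorted_map_seq (th : nat -> R) n : (forall l, (l + 1 < n)%nat -> th l >= th (l + 1)%nat) ->
  forall st len, (st + len <= n)%nat -> sortedd (map th (seq st len)).
Proof. intros H st len; revert st; induction len; intros st Hs; simpl; auto. split.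
  - intros y Hy. apply in_map_iff in Hy. destruct Hy as [j [<- Hj]]. apply in_seq in Hj.
    apply (noninc_chain th n H); lia.
  - apply IHlen; lia. Qed.

Lemma loc_obj_srt d n p r s a lam x :
  loc_obj d n p r s a lam x = sumR n (fun l => lam l * srt n (ftilde d p r s a x) l).
Proof. reflexivity. Qed.

Lemma ftilde_nonneg d p r s a x i : 0 <= ftilde d p r s a x i.
Proof. apply minR_ge. intros; apply rpow_nonneg. Qed.

Lemma mf_lower d n p r s m g a UB lam x z u v zeta w t theta :
  (1 <= s <= r)%nat -> (1 <= p)%nat ->
  (forall i, (i < n)%nat -> 0 <= lam i) ->
  mf_feasible d n p r s m g a UB true x z u v zeta w t theta ->
  loc_obj d n p r s a lam x <= mf_obj n lam theta.
Proof.
  intros hrs hp hlam F. unfold mf_feasible in F; cbv zeta beta iota in F.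
  destruct F as (F1 & F2 & F3 & F4 & F5 & F6 & F7 & F8 & F9 & F10 & F11 & F12 & F13 & F14 & F15 & F16).
  set (f := ftilde d p r s a x).
  assert (Hft : forall i, (i < n)%nat -> f i <= t i).
  { intros i Hi. destruct (binary_sum_one (z i) p (fun j Hj => F7 i j Hi Hj) (F14 i Hi)) as [j [Hj Ej]].
    assert (tau_norm d r s (fun k => x j k - a i k) <= u i j).
    { apply (holder r s hrs d _ (v i j) (zeta i j)). apply F5; auto.
      intros k Hk. destruct (F4 i j k Hi Hj Hk). destruct (F11 i j k Hi Hj Hk). split; auto.
      apply Rabs_le; lra.
      intros; apply F12; auto. apply F13; auto. }
    specialize (F10 i j Hi Hj). rewrite Ej in F10.
    assert (f i <= tau_norm d r s (fun k => x j k - a i k)).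
    { unfold f, ftilde. apply (minR_le _ (fun j0 => tau_norm d r s (fun k => x j0 k - a i k)) j); lia. }
    lra. }
  destruct (fun_choice_nat (fun i l => (i < n)%nat -> (l < n)%nat /\ w i l = 1)) as [sg Hsg].
  { intros i. destruct (lt_dec i n) as [Hi|Hi].
    - destruct (binary_sum_one (w i) n (fun l Hl => F6 i l Hi Hl) (F16 i Hi)) as [l [Hl El]].
      exists l; auto.
    - exists 0%nat; intros; lia. }
  assert (Hinj : forall i i', (i < n)%nat -> (i' < n)%nat -> sg i = sg i' -> i = i').
  { intros i i' Hi Hi' E. destruct (Nat.lt_total i i') as [Hl|[He|Hl]]; auto; exfalso.
    - destruct (Hsg i Hi) as [A B]. destruct (Hsg i' Hi') as [A' B'].
      pose proof (sumR_two n (fun k => w k (sg i)) i i' (fun k Hk => ltac:(destruct (F6 k (sg i) Hk A); lra)) Hl Hi').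
      simpl in H. rewrite <- E in B'. rewrite B, B' in H. rewrite F15 in H by auto. lra.
    - destruct (Hsg i Hi) as [A B]. destruct (Hsg i' Hi') as [A' B'].
      pose proof (sumR_two n (fun k => w k (sg i)) i' i (fun k Hk => ltac:(destruct (F6 k (sg i) Hk A); lra)) Hl Hi).
      simpl in H. rewrite <- E in B'. rewrite B, B' in H. rewrite F15 in H by auto. lra. }
  assert (Hts : forall i, (i < n)%nat -> t i <= theta (sg i)).
  { intros i Hi. destruct (Hsg i Hi) as [A B]. specialize (F8 i (sg i) Hi A). rewrite B in F8. lra. }
  assert (Hperm : Permutation (map theta (seq 0 n)) (map (fun i => theta (sg i)) (seq 0 n))).
  { apply (Permutation_nth _ _ 0). simpl. rewrite !length_map, length_seq. split; auto.
    exists sg. split; [|split].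
    - intros i Hi. apply Hsg; auto.
    - intros i i' Hi Hi' E. apply Hinj; auto.
    - intros i Hi. rewrite !nth_map_seq; auto. apply Hsg; auto. }
  assert (Hsrt : forall l, (l < n)%nat -> srt n f l <= theta l).
  { intros l Hl. eapply Rle_trans. apply (srt_mono n f (fun i => theta (sg i)) 0); auto.
    intros i Hi. rewrite Rplus_0_r. eapply Rle_trans; [apply Hft| apply Hts]; auto.
    unfold srt. rewrite <- (sort_perm_inv _ _ Hperm). rewrite sort_id.
    rewrite nth_map_seq; auto; lra. apply (sorted_map_seq theta n F9); lia. }
  rewrite loc_obj_srt. unfold mf_obj. apply sumR_le. intros l Hl.
  apply Rmult_le_compat_l; auto. Qed.
Lemma mf_exact d n p r s m g a UB lam x :
  (1 <= s <= r)%nat -> (1 <= p)%nat ->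
  (forall i, (i < n)%nat -> forall y, inK m g y -> tau_norm d r s (fun k => y k - a i k) <= UB i) ->
  loc_feasible p m g x ->
  exists z u v zeta w t theta,
    mf_feasible d n p r s m g a UB true x z u v zeta w t theta /\
    mf_obj n lam theta = loc_obj d n p r s a lam x.
Proof.
  intros hrs hp hUB Hx.
  set (f := ftilde d p r s a x).
  set (nrm := fun i j => tau_norm d r s (fun k => x j k - a i k)).
  assert (Hnrm0 : forall i j, 0 <= nrm i j) by (intros; apply rpow_nonneg).
  assert (HnUB : forall i j, (i < n)%nat -> (j < p)%nat -> nrm i j <= UB i).
  { intros; apply hUB; auto. }
  destruct (fun_choice_nat (fun i j => (j < p)%nat /\ f i = nrm i j)) as [js Hjs].
  { intros i. destruct (minR_attained (p - 1) (fun j => nrm i j)) as [j [Hj E]].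
    exists j; split; [lia| exact E]. }
  assert (Hf0 : forall i, 0 <= f i) by (intros; apply ftilde_nonneg).
  assert (HfUB : forall i, (i < n)%nat -> f i <= UB i).
  { intros i Hi. destruct (Hjs i) as [A B]. rewrite B. apply HnUB; auto. }
  assert (Hfle : forall i j, (j < p)%nat -> f i <= nrm i j).
  { intros i j Hj. unfold f, ftilde. apply (minR_le _ (fun j0 => nrm i j0) j); lia. }
  assert (HP : Permutation (map f (seq 0 n)) (sort_desc (map f (seq 0 n))))
    by (apply Permutation_sym, sort_perm).
  apply (Permutation_nth _ _ 0) in HP. simpl in HP.
  destruct HP as [_ [sg [Hsg1 [Hsg2 Hsg3]]]]. rewrite length_map, length_seq in Hsg1, Hsg2, Hsg3.
  assert (Hth : forall l, (l < n)%nat -> srt n f l = f (sg l)).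
  { intros l Hl. unfold srt. rewrite Hsg3 by auto. apply nth_map_seq. apply Hsg1; auto. }
  assert (Hsur := proj1 (bInjective_bSurjective Hsg1) Hsg2).
  set (z := fun i j => if Nat.eq_dec j (js i) then 1 else 0).
  set (w := fun i l => if Nat.eq_dec i (sg l) then 1 else 0).
  set (zeta := fun i j => zeta_of r s d (fun k => x j k - a i k)).
  exists z, nrm, (fun i j k => Rabs (x j k - a i k)), zeta, w, f, (srt n f).
  split; [|reflexivity].
  assert (Hz := fun i j => zeta_of_spec r s hrs d (fun k => x j k - a i k)).
  unfold mf_feasible; cbv zeta beta iota.
  split; [exact Hx|]. split.
  { intros l Hl. rewrite Hth; auto. }
  split; [intros; auto|]. split.
  { intros i j k _ _ _. split; [apply Rabs_pos| apply (proj1 (Hz i j))]. }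
  split; [intros; auto|]. split.
  { intros i l _ _. unfold w. destruct Nat.eq_dec; auto. }
  split.
  { intros i j _ _. unfold z. destruct Nat.eq_dec; auto. }
  split.
  { intros i l Hi Hl. unfold w. rewrite Hth by auto. destruct Nat.eq_dec.
    subst. lra. pose proof (HfUB i Hi). pose proof (Hf0 (sg l)). lra. }
  split.
  { intros l Hl. assert (sortedd (sort_desc (map f (seq 0 n)))) by apply sort_sorted.
    unfold srt. rewrite Nat.add_1_r. apply Rle_ge, sorted_nth; auto.
    rewrite length_sort, length_map, length_seq; lia. }
  split.
  { intros i j Hi Hj. unfold z. destruct Nat.eq_dec.
    - subst. destruct (Hjs i) as [A B]. rewrite <- B. lra.
    - pose proof (HnUB i j Hi Hj). pose proof (Hf0 i). lra. }
  split.
  { intros i j k _ _ _. pose proof (Rle_abs (x j k - a i k)). pose proof (Rabs_Ropp (x j k - a i k)).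
    pose proof (Rle_abs (-(x j k - a i k))). split; lra. }
  split.
  { intros i j k _ _ Hk. apply (proj1 (proj2 (Hz i j))); auto. }
  split.
  { intros i j _ _. apply (proj2 (proj2 (Hz i j))). }
  split.
  { intros i Hi. unfold z. destruct (Hjs i) as [A B]. rewrite (sumR_single p _ (js i)); auto.
    destruct Nat.eq_dec; [lra|congruence]. intros j _ Hj. destruct Nat.eq_dec; [congruence|reflexivity]. }
  split.
  { intros l Hl. unfold w. rewrite (sumR_single n _ (sg l)); auto.
    destruct Nat.eq_dec; [lra|congruence]. intros i _ Hi. destruct Nat.eq_dec; [congruence|reflexivity]. }
  { intros i Hi. destruct (Hsur i Hi) as [l0 [Hl0 E]]. unfold w. rewrite (sumR_single n _ l0); auto.
    destruct Nat.eq_dec; [lra|congruence]. intros l Hl Hne. destruct Nat.eq_dec; auto.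
    exfalso. apply Hne. apply Hsg2; auto; lia. }
Qed.
Lemma strict_feasible d n p r s m g a UB x z u v zeta w t theta :
  mf_relaxed_strict d n p r s m g a UB x z u v zeta w t theta ->
  mf_feasible d n p r s m g a UB false x z u v zeta w t theta.
Proof.
  intros (F1 & F2 & F3 & F4 & F5 & F6 & F7 & F8 & F9 & F10 & F11 & F12 & F13 & F14 & F15 & F16).
  unfold mf_feasible; cbv zeta beta iota.
  split. { intros j Hj k Hk. left; apply F1; auto. }
  split. { intros; left; apply F2; auto. }
  split. { intros; left; apply F3; auto. }
  split. { intros i j k Hi Hj Hk; destruct (F4 i j k Hi Hj Hk); split; lra. }
  split. { intros; left; apply F5; auto. }
  split. { intros i l Hi Hl; destruct (F6 i l Hi Hl); split; lra. }
  split. { intros i l Hi Hl; destruct (F7 i l Hi Hl); split; lra. }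
  split. { intros; left; apply F8; auto. }
  split. { intros l Hl; specialize (F9 l Hl); lra. }
  split. { intros; left; apply F10; auto. }
  split. { intros i j k Hi Hj Hk; destruct (F11 i j k Hi Hj Hk); split; lra. }
  split. { intros; left; apply F12; auto. }
  split. { intros; left; apply F13; auto. }
  auto.
Qed.

Lemma inv_INR_01 n : (1 <= n)%nat -> 0 < / INR n <= 1.
Proof. intros H. assert (1 <= INR n) by (replace 1 with (INR 1) by reflexivity; apply le_INR; auto).
  split. apply Rinv_0_lt_compat; lra. rewrite <- Rinv_1. apply Rinv_le_contravar; lra. Qed.

Lemma sum_inv n : (1 <= n)%nat -> sumR n (fun _ => / INR n) = 1.
Proof. intros H. rewrite sumR_const. apply Rinv_r. assert (0 < INR n) by (apply lt_0_INR; lia). lra. Qed.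

Lemma mf_slater d n p r s m g a UB :
  (1 <= s <= r)%nat -> (1 <= p)%nat -> (1 <= n)%nat ->
  (forall i, (i < n)%nat -> 0 <= UB i) ->
  slater_K m g ->
  exists x z u v zeta w t theta,
    mf_feasible d n p r s m g a UB false x z u v zeta w t theta /\
    mf_relaxed_strict d n p r s m g a UB x z u v zeta w t theta.
Proof.
  intros hrs hp hn hUB [x0 Hx0].
  set (U := fun i => sumR d (fun k => Rabs (x0 k - a i k) + 2) + 1).
  assert (HU : forall i k, (k < d)%nat -> Rabs (x0 k - a i k) + 2 < U i).
  { intros i k Hk. unfold U. assert (Rabs (x0 k - a i k) + 2 <= sumR d (fun k => Rabs (x0 k - a i k) + 2)).
    apply (sumR_term_le d (fun k => Rabs (x0 k - a i k) + 2)); auto. intros; pose proof (Rabs_pos (x0 i0 - a i i0)); lra. lra. }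
  assert (HU1 : forall i, 1 <= U i).
  { intros i. unfold U. assert (0 <= sumR d (fun k => Rabs (x0 k - a i k) + 2)).
    apply sumR_nonneg; intros; pose proof (Rabs_pos (x0 i0 - a i i0)); lra. lra. }
  set (t := fun i => U i + 1).
  set (T := sumR n t + 1).
  assert (HT : forall i, (i < n)%nat -> t i < T).
  { intros i Hi. unfold T. assert (t i <= sumR n t). apply sumR_term_le; auto.
    intros; unfold t; pose proof (HU1 i0); lra. lra. }
  assert (HT0 : 0 < T). { pose proof (HT 0%nat ltac:(lia)). unfold t in H. pose proof (HU1 0%nat). lra. }
  set (theta := fun l => T + INR n - INR l).
  exists (fun _ => x0), (fun _ _ => / INR p), (fun i _ => U i),
    (fun i _ k => Rabs (x0 k - a i k) + 1), (fun i _ k => Rabs (x0 k - a i k) + 2),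
    (fun _ _ => / INR n), t, theta.
  assert (S : mf_relaxed_strict d n p r s m g a UB (fun _ => x0) (fun _ _ => / INR p) (fun i _ => U i)
    (fun i _ k => Rabs (x0 k - a i k) + 1) (fun i _ k => Rabs (x0 k - a i k) + 2)
    (fun _ _ => / INR n) t theta).
  { pose proof (inv_INR_01 n hn). pose proof (inv_INR_01 p hp).
    split. { intros; apply Hx0; auto. }
    split. { intros l Hl. unfold theta. assert (INR l < INR n) by (apply lt_INR; auto). lra. }
    split. { intros i _. unfold t; pose proof (HU1 i); lra. }
    split. { intros i j k _ _ _. pose proof (Rabs_pos (x0 k - a i k)); split; lra. }
    split. { intros i _ _ _. pose proof (HU1 i); lra. }
    split. { intros; auto. }
    split. { intros; auto. }
    split. { intros i l Hi Hl. unfold theta. assert (INR l < INR n) by (apply lt_INR; auto).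
      specialize (HT i Hi). specialize (hUB i Hi). assert (0 <= UB i * (1 - / INR n)) by (apply Rmult_le_pos; lra). lra. }
    split. { intros l Hl. unfold theta. rewrite plus_INR. simpl (INR 1). lra. }
    split. { intros i j Hi _. unfold t. specialize (hUB i Hi). assert (0 <= UB i * (1 - / INR p)) by (apply Rmult_le_pos; lra). lra. }
    split. { intros i j k _ _ _. pose proof (Rle_abs (x0 k - a i k)). pose proof (Rabs_Ropp (x0 k - a i k)).
      pose proof (Rle_abs (-(x0 k - a i k))). split; lra. }
    split. { intros i j k _ _ Hk. set (vv := Rabs (x0 k - a i k) + 1).
      assert (Hv : 0 < vv) by (unfold vv; pose proof (Rabs_pos (x0 k - a i k)); lra).
      specialize (HU i k Hk). assert (HvU : vv < U i) by (unfold vv; lra).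
      replace r with (s + (r - s))%nat at 1 by lia. rewrite pow_add.
      assert (A : vv ^ s < (vv + 1) ^ s) by (apply pow_lt_nn; [lra|lia]).
      replace (Rabs (x0 k - a i k) + 2) with (vv + 1) by (unfold vv; lra).
      assert (B : vv ^ (r - s) <= U i ^ (r - s)) by (apply pow_incr; lra).
      assert (C : 0 < vv ^ (r - s)) by (apply pow_lt; lra).
      assert (D : 0 <= (vv + 1) ^ s) by (apply pow_le; lra).
      apply Rlt_le_trans with ((vv + 1) ^ s * vv ^ (r - s)). apply Rmult_lt_compat_r; auto.
      apply Rmult_le_compat_l; auto. }
    split. { intros i j _ _. unfold U. lra. }
    split. { intros; apply sum_inv; auto. }
    split. { intros; apply sum_inv; auto. }
    intros; apply sum_inv; auto. }
  split; auto. apply strict_feasible; auto.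
Qed.
Lemma fun_choice_gen {A : Type} (P : nat -> A -> Prop) : (forall i, exists a, P i a) -> exists f, forall i, P i (f i).
Proof. intros H. exists (fun i => proj1_sig (constructive_indefinite_description _ (H i))).
  intros; apply proj2_sig. Qed.

Lemma rpow_cont e y0 : 0 < e -> continuity_pt (fun y => rpow y e) y0.
Proof.
  intros He. destruct (Rle_dec y0 0) as [Hy|Hy].
  - intros eps Heps. set (dl := Rpower eps (/ e)). assert (Hdl : 0 < dl) by apply Rpower_pos.
    exists dl. split; [lra|]. intros x [_ Hx]. simpl in *. unfold R_dist in *.
    rewrite (rpow_zero y0) by auto. rewrite Rminus_0_r, Rabs_pos_eq by apply rpow_nonneg.
    destruct (Rle_dec x 0). rewrite rpow_zero by auto; lra.
    rewrite rpow_pos by lra. apply abslt in Hx.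
    replace eps with (Rpower dl e). apply Rlt_Rpower_l; lra.
    unfold dl. rewrite Rpower_mult, Rinv_l by lra. apply Rpower_1; lra.
  - assert (Hy' : 0 < y0) by lra.
    assert (C := derivable_continuous_pt _ _ (exist _ _ (derivable_pt_lim_power y0 e Hy'))).
    intros eps Heps. destruct (C eps Heps) as [alp [Ha H]].
    exists (Rmin alp y0). split. apply Rmin_glb_lt; lra.
    intros x [Dx Hx]. simpl in *. unfold R_dist in *.
    assert (Hx1 : Rabs (x - y0) < alp) by (eapply Rlt_le_trans; [apply Hx| apply Rmin_l]).
    assert (Hx2 : Rabs (x - y0) < y0) by (eapply Rlt_le_trans; [apply Hx| apply Rmin_r]).
    apply abslt in Hx2. rewrite !rpow_pos by lra. apply (H x). split; auto.
Qed.

Lemma cv_const c : Un_cv (fun _ => c) c.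
Proof. intros e He; exists 0%nat; intros; unfold Rdist; rewrite Rminus_diag, Rabs_R0; lra. Qed.

Lemma inv_cv0 : Un_cv (fun t => / (INR t + 1)) 0.
Proof. intros e He. destruct (INR_unbounded (/ e)) as [N HN]. exists N. intros t Ht. unfold Rdist.
  rewrite Rminus_0_r. assert (0 <= INR t) by apply pos_INR. rewrite Rabs_pos_eq by (left; apply Rinv_0_lt_compat; lra).
  assert (INR N <= INR t) by (apply le_INR; lia).
  rewrite <- (Rinv_inv e). apply Rinv_lt_contravar. apply Rmult_lt_0_compat; [apply Rinv_0_lt_compat|]; lra. lra. Qed.

Lemma incr_ge (f : nat -> nat) : (forall k, (f k < f (S k))%nat) -> forall k, (k <= f k)%nat.
Proof. intros H k; induction k; [lia|]. specialize (H k); lia. Qed.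

Lemma incr_lt (f : nat -> nat) : (forall k, (f k < f (S k))%nat) -> forall a b, (a < b)%nat -> (f a < f b)%nat.
Proof. intros H a b Hab; induction b; [lia|]. destruct (Nat.eq_dec a b). subst; auto.
  specialize (H b). assert (f a < f b)%nat by (apply IHb; lia). lia. Qed.

Lemma cv_subseq u l (psi : nat -> nat) : Un_cv u l -> (forall k, (psi k < psi (S k))%nat) ->
  Un_cv (fun k => u (psi k)) l.
Proof. intros H Hp e He. destruct (H e He) as [N HN]. exists N. intros k Hk. apply HN.
  pose proof (incr_ge psi Hp k); lia. Qed.

Fixpoint build (nx : nat -> nat -> nat) (k : nat) : nat :=
  match k with O => nx O O | S k' => nx (S (build nx k')) (S k') end.

Lemma BW_sub (u : nat -> R) M : (forall k, Rabs (u k) <= M) ->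
  exists psi : nat -> nat, (forall k, (psi k < psi (S k))%nat) /\ exists l, Un_cv (fun k => u (psi k)) l.
Proof.
  intros Hb. destruct (Bolzano_Weierstrass u (fun c => -M <= c <= M) (compact_P3 (-M) M)) as [l Hl].
  { intros k; specialize (Hb k); apply absle in Hb; lra. }
  assert (Hn : forall N k, exists q, (N <= q)%nat /\ Rabs (u q - l) < / (INR k + 1)).
  { intros N k. assert (Hp : 0 < / (INR k + 1)) by (apply Rinv_0_lt_compat; pose proof (pos_INR k); lra).
    destruct (Hl (disc l (mkposreal _ Hp)) N) as [q [Hq Hd]].
    exists (mkposreal _ Hp); intros y Hy; auto. exists q; split; auto. }
  destruct (fun_choice_gen (fun N h => forall k, (N <= h k)%nat /\ Rabs (u (h k) - l) < / (INR k + 1))) as [nx Hnx].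
  { intros N. apply (fun_choice_gen (fun k q => (N <= q)%nat /\ Rabs (u q - l) < / (INR k + 1))). apply Hn. }
  exists (build nx). split.
  - intros k. simpl. destruct (Hnx (S (build nx k)) (S k)). lia.
  - exists l. intros e He. destruct (INR_unbounded (/ e)) as [K HK]. exists K. intros k Hk. unfold Rdist.
    assert (Hk' : Rabs (u (build nx k) - l) < / (INR k + 1)).
    { destruct k; simpl; apply Hnx. }
    eapply Rlt_trans. apply Hk'. assert (INR K <= INR k) by (apply le_INR; lia).
    assert (0 <= INR K) by apply pos_INR.
    rewrite <- (Rinv_inv e). apply Rinv_lt_contravar. apply Rmult_lt_0_compat; [apply Rinv_0_lt_compat|]; lra. lra.
Qed.

Lemma multi_BW (X : nat -> nat -> nat -> R) M (cs : list (nat * nat)) :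
  (forall k c, In c cs -> Rabs (X k (fst c) (snd c)) <= M) ->
  exists phi : nat -> nat, (forall k, (phi k < phi (S k))%nat) /\
    exists L : nat -> nat -> R, forall c, In c cs -> Un_cv (fun k => X (phi k) (fst c) (snd c)) (L (fst c) (snd c)).
Proof.
  induction cs as [|c cs IH]; intros Hb.
  - exists (fun k => k). split; [intros; lia|]. exists (fun _ _ => 0). intros c [].
  - destruct IH as [phi [Hphi [L HL]]]. intros; apply Hb; right; auto.
    destruct (BW_sub (fun k => X (phi k) (fst c) (snd c)) M) as [psi [Hpsi [l Hl]]].
    { intros; apply Hb; left; auto. }
    exists (fun k => phi (psi k)). split. intros k; apply incr_lt; auto.
    exists (fun j kk => if Nat.eq_dec j (fst c) then if Nat.eq_dec kk (snd c) then l else L j kk else L j kk).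
    intros c' Hc'. destruct (Nat.eq_dec (fst c') (fst c)), (Nat.eq_dec (snd c') (snd c)).
    + destruct c, c'; simpl in *; subst; auto.
    + destruct Hc' as [->|Hc']; [congruence|]. apply (cv_subseq (fun k => X (phi k) (fst c') (snd c'))); auto.
    + destruct Hc' as [->|Hc']; [congruence|]. apply (cv_subseq (fun k => X (phi k) (fst c') (snd c'))); auto.
    + destruct Hc' as [->|Hc']; [congruence|]. apply (cv_subseq (fun k => X (phi k) (fst c') (snd c'))); auto.
Qed.

Lemma peval_cv d q (Y : nat -> nat -> R) Ys : poly_in d q ->
  (forall kk, (kk < d)%nat -> Un_cv (fun t => Y t kk) (Ys kk)) ->
  Un_cv (fun t => peval q (Y t)) (peval q Ys).
Proof. induction q; simpl; intros Hq H.
  - apply H; auto.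
  - apply cv_const.
  - destruct Hq. apply CV_plus; auto.
  - destruct Hq. apply CV_mult; auto. Qed.

Lemma tau_norm_cv d r s (Y : nat -> nat -> R) Ys : (1 <= s <= r)%nat ->
  (forall kk, (kk < d)%nat -> Un_cv (fun t => Y t kk) (Ys kk)) ->
  Un_cv (fun t => tau_norm d r s (Y t)) (tau_norm d r s Ys).
Proof. intros hrs H. pose proof (tau_pos r s hrs). unfold tau_norm.
  apply (continuity_seq (fun y => rpow y (/ tau r s))). apply rpow_cont. apply Rinv_0_lt_compat; auto.
  apply sumR_cv. intros kk Hk. apply (continuity_seq (fun y => rpow y (tau r s))). apply rpow_cont; auto.
  apply (continuity_seq Rabs). apply Rcontinuity_abs. apply H; auto. Qed.

Lemma loc_obj_cv d n p r s a lam (X : nat -> nat -> nat -> R) Xs : (1 <= s <= r)%nat -> (1 <= p)%nat ->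
  (forall j kk, (j < p)%nat -> (kk < d)%nat -> Un_cv (fun t => X t j kk) (Xs j kk)) ->
  Un_cv (fun t => loc_obj d n p r s a lam (X t)) (loc_obj d n p r s a lam Xs).
Proof. intros hrs hp H. rewrite loc_obj_srt. apply (sumR_cv n (fun t l => lam l * srt n (ftilde d p r s a (X t)) l)).
  intros l Hl. apply CV_mult. apply cv_const. apply (srt_cv n (fun t => ftilde d p r s a (X t))); auto.
  intros i Hi. unfold ftilde. apply (minR_cv (p - 1) (fun t j => tau_norm d r s (fun k => X t j k - a i k))).
  intros j Hj. apply (tau_norm_cv d r s (fun t k => X t j k - a i k)); auto.
  intros kk Hk. apply CV_minus. apply H; auto; lia. apply cv_const. Qed.

Lemma nth_nonneg L k : (forall y, In y L -> 0 <= y) -> 0 <= nth k L 0.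
Proof. revert k; induction L; intros k H; destruct k; simpl; try lra. apply H; left; auto.
  apply IHL; intros; apply H; right; auto. Qed.

Lemma loc_obj_nonneg d n p r s a lam x : (forall i, (i < n)%nat -> 0 <= lam i) -> 0 <= loc_obj d n p r s a lam x.
Proof. intros hl. rewrite loc_obj_srt. apply sumR_nonneg. intros l Hl. apply Rmult_le_pos; auto.
  unfold srt. apply nth_nonneg. intros y Hy. apply (Permutation_in _ (sort_perm _)) in Hy.
  apply in_map_iff in Hy. destruct Hy as [i [<- _]]. apply ftilde_nonneg. Qed.
Lemma loc_attain d n p m r s a lam g :
  (1 <= s <= r)%nat -> (1 <= p)%nat -> (forall i, (i < n)%nat -> 0 <= lam i) ->
  (forall k, (k < m)%nat -> poly_in d (g k)) ->
  (exists x0 : nat -> R, inK m g x0) ->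
  (exists B : R, forall y, inK m g y -> sumR d (fun k => y k ^ 2) <= B) ->
  exists xs, loc_feasible p m g xs /\
    forall x, loc_feasible p m g x -> loc_obj d n p r s a lam xs <= loc_obj d n p r s a lam x.
Proof.
  intros hrs hp hlam hg [x0 Hx0] [B HB].
  set (F := loc_obj d n p r s a lam).
  set (E := fun y => exists x, loc_feasible p m g x /\ y = - F x).
  destruct (completeness E) as [M [HM1 HM2]].
  { exists 0. intros y [x [_ ->]]. pose proof (loc_obj_nonneg d n p r s a lam x hlam). unfold F; lra. }
  { exists (- F (fun _ => x0)). exists (fun _ => x0). split; auto. intros j _; auto. }
  set (mn := - M).
  assert (Hlow : forall x, loc_feasible p m g x -> mn <= F x).
  { intros x Hx. assert (- F x <= M) by (apply HM1; exists x; auto). unfold mn; lra. }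
  assert (Happ : forall k, exists x, loc_feasible p m g x /\ F x < mn + / (INR k + 1)).
  { intros k. assert (Hp : 0 < / (INR k + 1)) by (apply Rinv_0_lt_compat; pose proof (pos_INR k); lra).
    destruct (classic (exists x, loc_feasible p m g x /\ F x < mn + / (INR k + 1))) as [H|H]; auto.
    exfalso. assert (M <= M - / (INR k + 1)); [|lra]. apply HM2. intros y [x [Hx ->]].
    destruct (Rle_dec (mn + / (INR k + 1)) (F x)). unfold mn in *; lra. exfalso; apply H; exists x; split; auto; lra. }
  destruct (fun_choice_gen _ Happ) as [X HX].
  set (cs := list_prod (seq 0 p) (seq 0 d)).
  assert (Hcs : forall j kk, In (j, kk) cs <-> (j < p)%nat /\ (kk < d)%nat).
  { intros j kk. unfold cs. rewrite in_prod_iff, !in_seq. lia. }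
  destruct (multi_BW X (B + 1) cs) as [phi [Hphi [L HL]]].
  { intros k [j kk] Hc. apply Hcs in Hc. destruct Hc as [Hj Hk]. simpl.
    destruct (HX k) as [Hf _]. specialize (HB (X k j) (Hf j Hj)).
    assert (X k j kk ^ 2 <= sumR d (fun k0 => X k j k0 ^ 2)).
    { apply (sumR_term_le d (fun k0 => X k j k0 ^ 2)); auto. intros; apply pow2_ge_0. }
    rewrite <- (pow2_abs (X k j kk)) in H. pose proof (Rabs_pos (X k j kk)). nra. }
  assert (Hcv : forall j kk, (j < p)%nat -> (kk < d)%nat -> Un_cv (fun t => X (phi t) j kk) (L j kk)).
  { intros j kk Hj Hk. apply (HL (j, kk)). apply Hcs; auto. }
  assert (HLf : loc_feasible p m g L).
  { intros j Hj k Hk. apply (Rle_cv_lim (Un := fun _ => 0) (Vn := fun t => peval (g k) (X (phi t) j))).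
    intros t. destruct (HX (phi t)) as [Hf _]. apply Hf; auto. apply cv_const.
    apply (peval_cv d (g k) (fun t => X (phi t) j)); auto. }
  exists L. split; auto.
  assert (HFL : F L <= mn).
  { apply (Rle_cv_lim (Un := fun t => F (X (phi t))) (Vn := fun t => mn + / (INR t + 1))).
    - intros t. destruct (HX (phi t)) as [_ H]. eapply Rle_trans. left; apply H.
      apply Rplus_le_compat_l. apply Rinv_le_contravar. pose proof (pos_INR t); lra.
      apply Rplus_le_compat_r, le_INR. apply incr_ge; auto.
    - apply (loc_obj_cv d n p r s a lam (fun t => X (phi t)) L); auto.
    - assert (Hc := CV_plus _ _ _ _ (cv_const mn) inv_cv0). rewrite Rplus_0_r in Hc. exact Hc. }
  intros x Hx. pose proof (Hlow x Hx). fold F. lra.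
Qed.

Theorem theorem4p1
  (d n p m r s : nat) (a : nat -> nat -> R) (lam : nat -> R)
  (g : nat -> mpoly) (UB : nat -> R)
  (hd : (1 <= d)%nat) (hn : (1 <= n)%nat) (hp : (1 <= p)%nat)
  (hlam : forall i, (i < n)%nat -> 0 <= lam i)
  (hrs : (1 <= s <= r)%nat) (hgcd : Nat.gcd r s = 1%nat)
  (hg : forall k, (k < m)%nat -> poly_in d (g k))
  (hKne : exists x0 : nat -> R, inK m g x0)
  (hKbd : exists B : R, forall y, inK m g y -> sumR d (fun k => y k ^ 2) <= B)
  (harch : archimedean d m g)
  (hUB : forall i, (i < n)%nat ->
     forall y, inK m g y -> tau_norm d r s (fun k => y k - a i k) <= UB i) :
  (* (i) *)
  (forall x, loc_feasible p m g x ->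
     exists z u v zeta w t theta,
       mf_feasible d n p r s m g a UB true x z u v zeta w t theta /\
       mf_obj n lam theta = loc_obj d n p r s a lam x) /\
  (* (ii) *)
  (forall x z u v zeta w t theta,
     mf_feasible d n p r s m g a UB true x z u v zeta w t theta ->
     loc_feasible p m g x) /\
  (* (iii) rho_lambda = hat rho_lambda (both minima attained) *)
  (exists rho : R,
     ((exists x, loc_feasible p m g x /\ loc_obj d n p r s a lam x = rho) /\
      (forall x, loc_feasible p m g x -> rho <= loc_obj d n p r s a lam x)) /\
     ((exists x z u v zeta w t theta,
         mf_feasible d n p r s m g a UB true x z u v zeta w t theta /\
         mf_obj n lam theta = rho) /\
      (forall x z u v zeta w t theta,
         mf_feasible d n p r s m g a UB true x z u v zeta w t theta ->
         rho <= mf_obj n lam theta))) /\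
  (* (iv) *)
  (slater_K m g ->
     exists x z u v zeta w t theta,
       mf_feasible d n p r s m g a UB false x z u v zeta w t theta /\
       mf_relaxed_strict d n p r s m g a UB x z u v zeta w t theta).
Proof.
  assert (Hi : forall x, loc_feasible p m g x ->
     exists z u v zeta w t theta,
       mf_feasible d n p r s m g a UB true x z u v zeta w t theta /\
       mf_obj n lam theta = loc_obj d n p r s a lam x).
  { intros x Hx. apply mf_exact; auto. }
  assert (Hii : forall x z u v zeta w t theta,
     mf_feasible d n p r s m g a UB true x z u v zeta w t theta -> loc_feasible p m g x).
  { intros x z u v zeta w t theta F. unfold mf_feasible in F. exact (proj1 F). }
  split; [exact Hi|]. split; [exact Hii|]. split.
  - destruct (loc_attain d n p m r s a lam g hrs hp hlam hg hKne hKbd) as [xs [Hxs Hmin]].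
    exists (loc_obj d n p r s a lam xs). split.
    + split. exists xs; auto. auto.
    + split.
      * destruct (Hi xs Hxs) as (z & u & v & zeta & w & t & theta & H1 & H2).
        exists xs, z, u, v, zeta, w, t, theta. auto.
      * intros x z u v zeta w t theta F. eapply Rle_trans. apply Hmin. eapply Hii; eauto.
        eapply mf_lower; eauto.
  - intros HS. apply mf_slater; auto. intros i Hi'. destruct hKne as [x0 Hx0].
    eapply Rle_trans. apply (tau_norm_nonneg r s d (fun k => x0 k - a i k)). apply hUB; auto.
Qed.
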